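(* Let $\mathsf P=(E,<,\#)$ be a prime event structure and let $\mathcal N(\mathsf P)=\langle S,E,F,I,\emptyset,\mathsf m,\ell\rangle$ be the net with $S=\{(\ast,e)\mid e\in E\}\cup\{(e,\ast)\mid e\in E\}\cup\{(\{e,e'\},\#)\mid e\ \#\ e'\}$, $F=\{(e,(e,\ast))\}_{e\in E}\cup\{((\ast,e),e)\}_{e\in E}\cup\{((W,\#),e)\mid (W,\#)\in S,\ e\in W\}$, $I=\{((\ast,e'),e)\mid e'<e\}$, $\mathsf m=\{(\ast,e)\mid e\in E\}\cup\{(\{e,e'\},\#)\mid e\ \#\ e'\}$, and $\ell$ the identity. Then $\mathcal N(\mathsf P)$ is an occurrence causal net.
   Context: A prime event structure is $\mathsf P=(E,<,\#)$ with $E$ a countable set, $<$ an irreflexive partial order with $\{e'\mid e'<e\}$ finite for each $e$, and $\#$ irreflexive, symmetric and hereditary ($e\ \#\ e'<e''\Rightarrow e\ \#\ e''$). A labelled contextual net $N=\langle S,T,F,I,R,\mathsf m,\ell\rangle$ has disjoint places $S$ and transitions $T$, flow $F\subseteq(S\times T)\cup(T\times S)$, inhibitor arcs $I\subseteq S\times T$, read arcs $R\subseteq S\times T$, initial marking $\mathsf m$, total labelling $\ell:T\to L$; ${}^\bullet x,x^\bullet$ pre/postsets, ${}^\circ t=\{s\mid(s,t)\in I\}$, $\underline t=\{s\mid(s,t)\in R\}$; every transition has nonempty preset; $t$ enabled at $m$ if ${}^\bullet t+\underline t\subseteq m$ and $m(s)=0$ for $s\in{}^\circ t$; firing gives $m-{}^\bullet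 t+t^\bullet$. States are multisets of transitions of finite firing sequences from $\mathsf m$; $\lfloor X\rfloor$ is the support. Nets are assumed safe. $<_N$ is the transitive closure of $F$. $t\prec_N t'$ iff ${}^\bullet t\cap{}^\circ t'\neq\emptyset$ or $t^\bullet\cap\underline{t'}\neq\emptyset$; $t\ \#_N\ t'$ iff no state contains both. Pre-causal: (1) $<_N\cap(T\times T)=\emptyset$, ${}^\bullet t\cap{}^\circ t=\emptyset$, $t^\bullet\cap\underline t=\emptyset$; (2) $|\ell(s^\bullet)|=1$ for $s\in{}^\circ t$; (3) $t\prec_N t'\Rightarrow$ not $t'\prec_N t$; (4) ${}^\circ t\cup\underline t$ finite; (5) $t\ \#_N\ t'\Rightarrow{}^\bullet t\cap{}^\bullet t'\neq\emptyset$; (6) $t\neq t'$, $\ell(t)=\ell(t')\Rightarrow t\ \#_N\ t'$. Causal net: pre-causal with (a) $\prec^*$ restricted to each state's support a partial order and (b) each transition in some state's support. An occurrence causal net is a causal net $K$ with $R=\emptyset$, $\ell$ injective, $\prec_K^{*}$ a partial order on $T$, and $t\ \#_K\ t'\prec_K^{*}t''$ implying $t\ \#_K\ t''$. *)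

(* Defs.v *)
From Stdlib Require Import List Relations.
Import ListNotations.

Set Implicit Arguments.

Definition is_pes (E : Type) (lt cf : E -> E -> Prop) : Prop :=
  (exists f : E -> nat, forall x y, f x = f y -> x = y)
  /\ (forall e, ~ lt e e)
  /\ (forall e1 e2 e3, lt e1 e2 -> lt e2 e3 -> lt e1 e3)
  /\ (forall e, exists l : list E, forall e', lt e' e -> In e' l)
  /\ (forall e, ~ cf e e)
  /\ (forall e e', cf e e' -> cf e' e)
  /\ (forall e e' e'', cf e e' -> lt e' e'' -> cf e e'').

(* Places are the type S, transitions the type T (disjoint by construction). *)
Record cnet (S T L : Type) := CNet {
  pre  : S -> T -> Prop;   (* (s,t) in F *)
  post : T -> S -> Prop;   (* (t,s) in F *)
  inh  : S -> T -> Prop;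
  rd   : S -> T -> Prop;
  m0   : S -> nat;
  lab  : T -> L
}.

Section Nets.
Variables (S T L : Type) (N : cnet S T L).

Definition ind (P : Prop) (n : nat) : Prop := (P /\ n = 1) \/ (~ P /\ n = 0).

Definition enabled (m : S -> nat) (t : T) : Prop :=
  (forall s a b, ind (pre N s t) a -> ind (rd N s t) b -> a + b <= m s)
  /\ (forall s, inh N s t -> m s = 0).

Definition fire (m : S -> nat) (t : T) (m' : S -> nat) : Prop :=
  enabled m t /\
  (forall s a b, ind (pre N s t) a -> ind (post N t s) b -> m' s = m s - a + b).

Inductive reach : list T -> (S -> nat) -> Prop :=
| reach_nil : reach [] (m0 N)
| reach_snoc sg m t m' : reach sg m -> fire m t m' -> reach (sg ++ [t]) m'.

Inductive occ : list T -> T -> nat -> Prop :=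
| occ_nil t : occ [] t 0
| occ_hit t l n : occ l t n -> occ (t :: l) t (Datatypes.S n)
| occ_miss t u l n : u <> t -> occ l t n -> occ (u :: l) t n.

Definition state (X : T -> nat) : Prop :=
  exists sg m, reach sg m /\ forall t, occ sg t (X t).

Definition supp (X : T -> nat) (t : T) : Prop := 0 < X t.

Definition safe : Prop := forall sg m, reach sg m -> forall s, m s <= 1.

Definition nonempty_presets : Prop := forall t, exists s, pre N s t.

Definition flow (x y : S + T) : Prop :=
  match x, y with
  | inl s, inr t => pre N s t
  | inr t, inl s => post N t s
  | _, _ => False
  end.
Definition ltN : relation (S + T) := clos_trans _ flow.

Definition precN (t t' : T) : Prop :=
  (exists s, pre N s t /\ inh N s t') \/ (exists s, post N t s /\ rd N s t').

Definition cfN (t t' : T) : Prop :=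
  ~ exists X, state X /\ supp X t /\ supp X t'.

Definition partial_order_on (D : T -> Prop) (r : relation T) : Prop :=
  (forall t, D t -> r t t)
  /\ (forall t1 t2 t3, D t1 -> D t2 -> D t3 -> r t1 t2 -> r t2 t3 -> r t1 t3)
  /\ (forall t1 t2, D t1 -> D t2 -> r t1 t2 -> r t2 t1 -> t1 = t2).

Definition finite_set (P : S -> Prop) : Prop :=
  exists l : list S, forall s, P s -> In s l.

Definition pre_causal : Prop :=
  (forall t t', ~ ltN (inr t) (inr t'))
  /\ (forall t, ~ exists s, pre N s t /\ inh N s t)
  /\ (forall t, ~ exists s, post N t s /\ rd N s t)
  /\ (forall s t, inh N s t ->
        exists a, (exists t', pre N s t' /\ lab N t' = a)
                  /\ forall t', pre N s t' -> lab N t' = a)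
  /\ (forall t t', precN t t' -> ~ precN t' t)
  /\ (forall t, finite_set (fun s => inh N s t \/ rd N s t))
  /\ (forall t t', cfN t t' -> exists s, pre N s t /\ pre N s t')
  /\ (forall t t', t <> t' -> lab N t = lab N t' -> cfN t t').

Definition precN_star_in (X : T -> nat) : relation T :=
  clos_refl_trans _ (fun t t' => supp X t /\ supp X t' /\ precN t t').

Definition causal_net : Prop :=
  pre_causal
  /\ (forall X, state X -> partial_order_on (supp X) (precN_star_in X))
  /\ (forall t, exists X, state X /\ supp X t).

Definition occurrence_causal_net : Prop :=
  nonempty_presets /\ safe
  /\ causal_net
  /\ (forall s t, ~ rd N s t)
  /\ (forall t t', lab N t = lab N t' -> t = t')
  /\ partial_order_on (fun _ => True) (clos_refl_trans _ precN)
  /\ (forall t t' t'', cfN t t' -> clos_refl_trans _ precN t' t'' -> cfN t t'').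

End Nets.

Section NP.
Variables (E : Type) (lt cf : E -> E -> Prop).

(* raw places: PStar e = (*,e), PDone e = (e,*), PCf W = (W,#) *)
Inductive rplace : Type :=
| PStar : E -> rplace
| PDone : E -> rplace
| PCf : (E -> Prop) -> rplace.

Definition is_place (p : rplace) : Prop :=
  match p with
  | PCf W => exists e e', cf e e' /\ forall x, W x <-> (x = e \/ x = e')
  | _ => True
  end.

Definition place : Type := { p : rplace | is_place p }.

Definition NP_pre (s : place) (e : E) : Prop :=
  match proj1_sig s with
  | PStar e' => e' = e
  | PDone _ => False
  | PCf W => W e
  end.

Definition NP_post (e : E) (s : place) : Prop := proj1_sig s = PDone e.

Definition NP_inh (s : place) (e : E) : Prop :=
  exists e', proj1_sig s = PStar e' /\ lt e' e.

Definition NP_rd (s : place) (e : E) : Prop := False.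

Definition NP_m0 (s : place) : nat :=
  match proj1_sig s with
  | PStar _ => 1
  | PDone _ => 0
  | PCf _ => 1
  end.

Definition NP : cnet place E E :=
  CNet NP_pre NP_post NP_inh NP_rd NP_m0 (fun e => e).

End NP.

(* Main.v *)
Require Import Defs.
From Stdlib Require Import List Relations.
From Stdlib Require Import Classical ClassicalEpsilon Lia.
Import ListNotations.

Lemma ind_ex (P : Prop) : exists n, ind P n.
Proof. destruct (classic P); [exists 1; left | exists 0; right]; auto. Qed.
Lemma ind_T (P:Prop) n : P -> ind P n -> n = 1.
Proof. intros H [[_ ?]|[? _]]; [auto| contradiction]. Qed.
Lemma ind_F (P:Prop) n : ~P -> ind P n -> n = 0.
Proof. intros H [[? _]|[_ ?]]; [contradiction|auto]. Qed.
Lemma ind_le (P:Prop) n : ind P n -> n <= 1.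
Proof. intros [[_ ?]|[_ ?]]; lia. Qed.

Lemma occ_in T (l : list T) t n : occ l t n -> (0 < n <-> In t l).
Proof.
  induction 1; simpl.
  - split; intro H; [lia | destruct H].
  - split; intros; [auto | lia].
  - rewrite IHocc. split; [auto | intros [->|?]; [congruence | auto]].
Qed.

Lemma occ_nodup T (l : list T) : NoDup l -> forall t, (In t l -> occ l t 1) /\ (~In t l -> occ l t 0).
Proof.
  induction 1; intro t.
  - split; intros; [contradiction | constructor].
  - destruct (IHNoDup t) as [I1 I2]. split; intro Hin.
    + destruct (classic (x = t)) as [->|Hne].
      * constructor. apply I2; auto.
      * apply occ_miss; auto. apply I1. destruct Hin; [contradiction|auto].
    + apply occ_miss. intro; subst; apply Hin; left; auto. apply I2. intro; apply Hin; right; auto.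
Qed.

Lemma state_of S T L (N : cnet S T L) sg m : NoDup sg -> reach N sg m ->
  exists X, state N X /\ forall t, supp X t <-> In t sg.
Proof.
  intros Hnd Hr.
  exists (fun t => if excluded_middle_informative (In t sg) then 1 else 0).
  split.
  - exists sg, m. split; auto. intro t.
    destruct (excluded_middle_informative (In t sg)); apply (occ_nodup _ _ Hnd t); auto.
  - intro t. unfold supp. destruct (excluded_middle_informative (In t sg)); split; intros; auto; try lia; contradiction.
Qed.

Lemma NoDup_snoc T (l : list T) t : NoDup l -> ~In t l -> NoDup (l ++ [t]).
Proof.
  induction 1; intros Hn; simpl.
  - constructor; [intros []| constructor].
  - constructor.
    + rewrite in_app_iff. intros [?|[?|[]]]; [contradiction|]. subst; apply Hn; left; auto.
    + apply IHNoDup. intro; apply Hn; right; auto.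
Qed.

Lemma filter_ex A (P : A -> Prop) (l : list A) : exists l',
  (forall x, In x l' <-> In x l /\ P x) /\ length l' <= length l /\
  ((exists x, In x l /\ ~P x) -> length l' < length l).
Proof.
  induction l as [|a l IH].
  - exists []. simpl. split; [|split; [lia|]].
    + intro x; split; [intros []| intros [[] _]].
    + intros [x [[] _]].
  - destruct IH as [l' [H1 [H2 H3]]]. destruct (classic (P a)) as [Pa|Pa].
    + exists (a :: l'). simpl. split; [|split; [lia|]].
      * intro x; split.
        -- intros [<-|H]; [split; auto|]. apply H1 in H; destruct H; split; auto.
        -- intros [[<-|H] HP]; [left; auto | right; apply H1; auto].
      * intros [x [[<-|H] HP]]; [contradiction|]. assert (length l' < length l) by eauto. lia.
    + exists l'. simpl. split; [|split; [lia|intros; lia]].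
      intro x; rewrite H1; split; [intros [? ?]; auto| intros [[<-|H] HP]; [contradiction|auto]].
Qed.

Lemma max_ex E (lt : E -> E -> Prop) : (forall e, ~lt e e) ->
  (forall a b c, lt a b -> lt b c -> lt a c) ->
  forall l, l <> [] -> exists x, In x l /\ forall y, In y l -> ~lt x y.
Proof.
  intros Hirr Htr. induction l as [|a l IH]; intro Hne; [congruence|].
  destruct (classic (l = [])) as [->|Hl].
  - exists a. split; [left; auto|]. intros y [<-|[]]; auto.
  - destruct (IH Hl) as [m [Hm Hmax]]. destruct (classic (lt m a)) as [Hma|Hma].
    + exists a; split; [left; auto|]. intros y [<-|Hy]; auto.
      intro Hay. apply (Hmax y Hy). eauto.
    + exists m; split; [right; auto|]. intros y [<-|Hy]; auto.
Qed.

Lemma rt_lt E (lt : E -> E -> Prop) (R : relation E) :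
  (forall a b c, lt a b -> lt b c -> lt a c) ->
  (forall a b, R a b -> lt a b) -> forall a b, clos_refl_trans _ R a b -> a = b \/ lt a b.
Proof.
  intros Htr HR a b H. induction H; auto.
  destruct IHclos_refl_trans1 as [->|H1]; auto.
  destruct IHclos_refl_trans2 as [->|H2]; eauto.
Qed.

Definition Inv E (lt cf : E -> E -> Prop) (sg : list E) (m : place cf -> nat) : Prop :=
  NoDup sg /\ (forall x y, In y sg -> lt x y -> In x sg) /\
  forall s : place cf, match proj1_sig s with
  | PStar e => (m s = 1 /\ ~In e sg) \/ (m s = 0 /\ In e sg)
  | PDone e => (m s = 0 /\ ~In e sg) \/ (m s = 1 /\ In e sg)
  | PCf W => (m s = 1 /\ forall z, In z sg -> ~W z) \/ (m s = 0 /\ exists z, In z sg /\ W z)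
  end.
Arguments Inv {E}.

Definition pstar E (cf : E -> E -> Prop) (e : E) : place cf :=
  exist (fun p => is_place cf p) (PStar e) I.
Arguments pstar {E}.

Lemma reach_inv E (lt cf : E -> E -> Prop) sg m :
  reach (NP lt cf) sg m -> Inv lt cf sg m.
Proof.
  induction 1 as [|sg m t m' Hr IH Hf].
  - split; [constructor|split; [intros _ _ []|]].
    intros [p Hp]; destruct p; simpl; auto.
  - destruct IH as [Hnd [Hdc Hpl]].
    destruct Hf as [[Hpre Hinh] Heq].
    assert (Ht : ~ In t sg).
    { pose proof (Hpre (pstar cf t) 1 0) as H.
      assert (1 + 0 <= m (pstar cf t)) as H1.
      { apply H. left; split; [exact eq_refl|reflexivity].
        right; split; [exact (fun h => h)|reflexivity]. }
      pose proof (Hpl (pstar cf t)) as H2; simpl in H2. destruct H2 as [[_ ?]|[H2 _]]; auto. lia. }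
    split; [apply NoDup_snoc; auto|split].
    + intros x y Hy Hxy. rewrite in_app_iff in *. destruct Hy as [Hy|[<-|[]]]; [left; eauto|].
      left. pose proof (Hinh (pstar cf x)) as H. 
      assert (H0 : m (pstar cf x) = 0). { apply H. exists x; split; auto. }
      pose proof (Hpl (pstar cf x)) as H2; simpl in H2. destruct H2 as [[? _]|[_ ?]]; auto. lia.
    + intros s.
      destruct (ind_ex (pre (NP lt cf) s t)) as [a Ha].
      destruct (ind_ex (post (NP lt cf) t s)) as [b Hb].
      rewrite (Heq _ a b Ha Hb).
      pose proof (Hpre s a 0 Ha) as Hen.
      assert (Hen' : a <= m s).
      { replace a with (a + 0) by lia. apply Hen. right; split; [exact (fun h => h)|reflexivity]. }
      clear Hen.
      pose proof (Hpl s) as H2.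
      destruct s as [p Hp]; destruct p as [e|e|W]; simpl in H2 |- *.
      * assert (b = 0) by (eapply ind_F; [|exact Hb]; intro h; cbn in h; discriminate h). subst b.
        destruct (classic (e = t)) as [->|Hne].
        -- assert (a = 1) by (apply (ind_T _ _ (eq_refl : t = t) Ha)). subst a.
           right. split; [|apply in_app_iff; right; left; auto].
           destruct H2 as [[-> _]|[_ ?]]; [lia|contradiction].
        -- assert (a = 0) by (apply (ind_F _ _ Hne Ha)). subst a.
           rewrite in_app_iff. simpl.
           destruct H2 as [[-> ?]|[-> ?]]; [left|right]; (split; [lia|]); intuition.
      * assert (a = 0) by (eapply ind_F; [|exact Ha]; intro h; cbn in h; exact h). subst a.
        destruct (classic (e = t)) as [->|Hne].
        -- assert (b = 1) by (apply (ind_T _ _ (eq_refl : PDone t = PDone t) Hb)). subst b.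
           right. split; [|apply in_app_iff; right; left; auto].
           destruct H2 as [[-> _]|[_ ?]]; [lia|contradiction].
        -- assert (b = 0). { eapply ind_F; [|exact Hb]; intro h; apply Hne; cbn in h; unfold NP_post in h; cbn in h; injection h; auto. } subst b.
           rewrite in_app_iff. simpl.
           destruct H2 as [[-> ?]|[-> ?]]; [left|right]; (split; [lia|]); intuition.
      * assert (b = 0) by (eapply ind_F; [|exact Hb]; intro h; cbn in h; discriminate h). subst b.
        destruct (classic (W t)) as [Wt|Wt].
        -- assert (a = 1) by (apply (ind_T _ _ Wt Ha)). subst a.
           right. split; [|exists t; split; auto; apply in_app_iff; right; left; auto].
           destruct H2 as [[-> _]|[-> _]]; lia.
        -- assert (a = 0) by (apply (ind_F _ _ Wt Ha)). subst a.
           destruct H2 as [[-> H]|[-> [z [Hz Wz]]]]; [left|right]; (split; [lia|]).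
           ++ intros z Hz. rewrite in_app_iff in Hz. destruct Hz as [Hz|[<-|[]]]; auto.
           ++ exists z; split; auto. apply in_app_iff; auto.
Qed.

Lemma build E (lt cf : E -> E -> Prop) : is_pes lt cf ->
  forall n (D : list E), length D <= n ->
  (forall x y, In y D -> lt x y -> In x D) ->
  (forall x y, In x D -> In y D -> ~cf x y) ->
  exists sg m, reach (NP lt cf) sg m /\ forall x, In x D <-> In x sg.
Proof.
  intros [_ [Hirr [Htr [_ [Hcirr [Hsym Hher]]]]]].
  induction n as [|n IH]; intros D Hlen Hdc Hcf.
  - destruct D; simpl in Hlen; [|lia].
    exists [], (m0 (NP lt cf)). split; [constructor|]. intro; tauto.
  - destruct (classic (D = [])) as [->|HD].
    { exists [], (m0 (NP lt cf)). split; [constructor|]. intro; tauto. }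
    destruct (max_ex _ _ Hirr Htr D HD) as [x [Hx Hmax]].
    destruct (filter_ex _ (fun y => y <> x) D) as [D' [HD1 [_ HD3]]].
    assert (Hl : length D' < length D) by (apply HD3; exists x; split; auto).
    destruct (IH D') as [sg [m [Hr Hsg]]].
    + lia.
    + intros a b Hb Hab. apply HD1 in Hb. destruct Hb as [Hb Hbx].
      apply HD1. split; eauto. intros ->. apply (Hmax b Hb Hab).
    + intros a b Ha Hb. apply HD1 in Ha; apply HD1 in Hb. apply Hcf; tauto.
    + destruct (reach_inv _ _ _ _ _ Hr) as [Hnd [_ Hpl]].
      assert (Hxs : ~ In x sg). { rewrite <- Hsg, HD1. tauto. }
      assert (HS : forall s : place cf, proj1_sig s = PStar x -> m s = 1).
      { intros s Hs. pose proof (Hpl s) as H. rewrite Hs in H. destruct H as [[? _]|[_ ?]]; tauto. }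
      assert (HDn : forall s : place cf, proj1_sig s = PDone x -> m s = 0).
      { intros s Hs. pose proof (Hpl s) as H. rewrite Hs in H. destruct H as [[? _]|[_ ?]]; tauto. }
      assert (HW : forall (s : place cf) W, proj1_sig s = PCf W -> W x -> m s = 1).
      { intros [p Hp] W Hs Wx. simpl in Hs. subst p.
        pose proof (Hpl (exist _ (PCf W) Hp)) as H. simpl in H.
        destruct H as [[? _]|[_ [z [Hz Wz]]]]; auto.
        exfalso. destruct Hp as [e [e' [Hee' HWi]]].
        assert (HzD : In z D /\ z <> x) by (apply HD1, Hsg; auto).
        destruct HzD as [HzD Hzx].
        apply HWi in Wx; apply HWi in Wz.
        destruct Wx as [Ex|Ex]; destruct Wz as [Ez|Ez]; try congruence.
        - apply (Hcf x z Hx HzD). rewrite Ex, Ez. exact Hee'.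
        - apply (Hcf z x HzD Hx). rewrite Ex, Ez. exact Hee'. }
      exists (sg ++ [x]).
      exists (fun s : place cf => match proj1_sig s with
        | PStar e => if excluded_middle_informative (e = x) then 0 else m s
        | PDone e => if excluded_middle_informative (e = x) then 1 else m s
        | PCf W => if excluded_middle_informative (W x) then 0 else m s end).
      split.
      * apply reach_snoc with m; auto. split; [split|].
        -- intros s a b Ha Hb.
           assert (b = 0) by (eapply ind_F; [|exact Hb]; intro h; exact h). subst b.
           pose proof (ind_le _ _ Ha).
           destruct s as [p Hp]; destruct p as [e|e|W].
           ++ destruct (classic (e = x)) as [->|Hne].
              ** rewrite HS by reflexivity. lia.
              ** assert (a = 0) by (eapply ind_F; [|exact Ha]; intro h; apply Hne; exact h). lia.
           ++ assert (a = 0) by (eapply ind_F; [|exact Ha]; intro h; exact h). lia.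
           ++ destruct (classic (W x)) as [Wx|Wx].
              ** rewrite (HW _ W) by (reflexivity || exact Wx). lia.
              ** assert (a = 0) by (eapply ind_F; [|exact Ha]; intro h; apply Wx; exact h). lia.
        -- intros [p Hp] [e' [He' Hlt]]. simpl in He'. subst p.
           pose proof (Hpl (exist _ (PStar e') Hp)) as H. simpl in H.
           assert (In e' sg).
           { apply Hsg, HD1. split; [eauto|]. intros ->; apply (Hirr x); auto. }
           destruct H as [[_ ?]|[? _]]; tauto.
        -- intros s a b Ha Hb. destruct s as [p Hp]; destruct p as [e|e|W]; simpl.
           ++ assert (b = 0) by (eapply ind_F; [|exact Hb]; intro h; cbn in h; discriminate h). subst b.
              destruct (excluded_middle_informative (e = x)) as [->|Hne].
              ** assert (a = 1) by (eapply ind_T; [|exact Ha]; reflexivity). subst a.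
                 rewrite HS by reflexivity. reflexivity.
              ** assert (a = 0) by (eapply ind_F; [|exact Ha]; intro h; apply Hne; exact h). lia.
           ++ assert (a = 0) by (eapply ind_F; [|exact Ha]; intro h; exact h). subst a.
              destruct (excluded_middle_informative (e = x)) as [->|Hne].
              ** assert (b = 1) by (eapply ind_T; [|exact Hb]; reflexivity). subst b.
                 rewrite HDn by reflexivity. reflexivity.
              ** assert (b = 0). { eapply ind_F; [|exact Hb]; intro h; apply Hne; cbn in h; unfold NP_post in h; cbn in h; injection h; auto. }
                 lia.
           ++ assert (b = 0) by (eapply ind_F; [|exact Hb]; intro h; cbn in h; discriminate h). subst b.
              destruct (excluded_middle_informative (W x)) as [Wx|Wx].
              ** assert (a = 1) by (eapply ind_T; [|exact Ha]; exact Wx). subst a.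
                 rewrite (HW _ W) by (reflexivity || exact Wx). reflexivity.
              ** assert (a = 0) by (eapply ind_F; [|exact Ha]; intro h; apply Wx; exact h). lia.
      * intro y. rewrite in_app_iff, <- Hsg, HD1. simpl.
        split; [intros Hy; destruct (classic (y = x)); [right; left; auto|left; auto]|].
        intros [[? ?]|[<-|[]]]; auto.
Qed.

Lemma state_has E (lt cf : E -> E -> Prop) : is_pes lt cf -> forall t t', ~ cf t t' ->
  exists X, state (NP lt cf) X /\ supp X t /\ supp X t'.
Proof.
  intros Hp t t' Hc. pose proof Hp as [_ [Hirr [Htr [Hfin [Hcirr [Hsym Hher]]]]]].
  destruct (Hfin t) as [l1 Hl1]. destruct (Hfin t') as [l2 Hl2].
  destruct (filter_ex _ (fun x => lt x t \/ x = t \/ lt x t' \/ x = t') (l1 ++ l2 ++ [t; t']))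
    as [D [HD _]].
  assert (HDi : forall x, In x D <-> (lt x t \/ x = t \/ lt x t' \/ x = t')).
  { intro x. rewrite HD. split; [tauto|]. intro H; split; auto.
    rewrite !in_app_iff. simpl. destruct H as [H|[H|[H|H]]]; auto. }
  destruct (build _ _ _ Hp (length D) D (le_n _)) as [sg [m [Hr Hsg]]].
  - intros x y Hy Hxy. apply HDi in Hy. apply HDi.
    destruct Hy as [H|[Hq|[H|Hq]]]; subst; eauto.
  - intros x y Hx Hy Hxy. apply HDi in Hx; apply HDi in Hy.
    assert (Hyb : forall b, (lt y b \/ y = b) -> cf x b).
    { intros b [H|H]; subst; eauto. }
    assert (Hab : forall a b, (lt x a \/ x = a) -> (lt y b \/ y = b) -> cf a b).
    { intros a b Ha Hb. apply Hsym. pose proof (Hsym _ _ (Hyb b Hb)) as Hbx.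
      destruct Ha as [Ha|Ha]; [eauto|subst; auto]. }
    destruct Hx as [Hx|[Hx|[Hx|Hx]]]; destruct Hy as [Hy|[Hy|[Hy|Hy]]];
    first [ apply (Hcirr t); apply Hab; auto; fail
          | apply (Hcirr t'); apply Hab; auto; fail
          | apply Hc; apply Hab; auto; fail
          | apply Hc; apply Hsym; apply Hab; auto; fail ].
  - destruct (reach_inv _ _ _ _ _ Hr) as [Hnd _].
    destruct (state_of _ _ _ _ _ _ Hnd Hr) as [X [HX HXs]].
    exists X. split; auto. split; apply HXs, Hsg, HDi; auto.
Qed.

Lemma state_down E (lt cf : E -> E -> Prop) X x y :
  state (NP lt cf) X -> supp X y -> lt x y -> supp X x.
Proof.
  intros [sg [m [Hr Hocc]]] Hy Hxy.
  destruct (reach_inv _ _ _ _ _ Hr) as [_ [Hdc _]].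
  unfold supp in *. apply (occ_in _ _ _ _ (Hocc x)). apply (occ_in _ _ _ _ (Hocc y)) in Hy. eauto.
Qed.

Lemma precN_iff E (lt cf : E -> E -> Prop) t t' : precN (NP lt cf) t t' <-> lt t t'.
Proof.
  split.
  - intros [[s [Hpre [e' [He' Hlt]]]]|[s [_ []]]].
    cbn in Hpre. unfold NP_pre in Hpre. rewrite He' in Hpre. subst; auto.
  - intro H. left. exists (pstar cf t). split; [reflexivity|]. exists t; split; auto.
Qed.

Lemma flow_first E (lt cf : E -> E -> Prop) x y :
  clos_trans _ (flow (NP lt cf)) x y -> exists z, flow (NP lt cf) x z.
Proof. induction 1; eauto. Qed.

Lemma flow_tr E (lt cf : E -> E -> Prop) x y :
  clos_trans _ (flow (NP lt cf)) x y -> forall t, x = inr t ->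
  exists s, y = inl s /\ proj1_sig s = PDone t.
Proof.
  induction 1 as [x y H|x y z H1 IH1 H2 IH2]; intros t Ht; subst x.
  - destruct y as [s|t']; [|destruct H]. exists s; split; auto.
  - destruct (IH1 t eq_refl) as [s [-> Hs]].
    destruct (flow_first _ _ _ _ _ H2) as [w Hw].
    destruct w as [s'|t']; [destruct Hw|].
    cbn in Hw. unfold NP_pre in Hw. rewrite Hs in Hw. destruct Hw.
Qed.

Theorem mainTheorem13 (E : Type) (lt cf : E -> E -> Prop) :
  is_pes lt cf -> occurrence_causal_net (NP lt cf).
Proof.
  intros Hp. pose proof Hp as [_ [Hirr [Htr [Hfin [Hcirr [Hsym Hher]]]]]].
  assert (Hrt : forall R : relation E, (forall a b, R a b -> precN (NP lt cf) a b) ->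
            forall a b, clos_refl_trans _ R a b -> a = b \/ lt a b).
  { intros R HR. apply rt_lt; auto. intros a b H. apply precN_iff with (cf := cf). auto. }
  assert (Hpo : forall D (R : relation E), (forall a b, R a b -> precN (NP lt cf) a b) ->
            partial_order_on D (clos_refl_trans _ R)).
  { intros D R HR. split; [intros; apply rt_refl|split].
    - intros; eapply rt_trans; eauto.
    - intros t1 t2 _ _ H1 H2. apply (Hrt R HR) in H1. apply (Hrt R HR) in H2.
      destruct H1 as [?|H1]; auto. destruct H2 as [?|H2]; auto.
      exfalso; apply (Hirr t1); eauto. }
  split; [|split; [|split; [|split; [|split; [|split]]]]].
  - intro t. exists (pstar cf t). reflexivity.
  - intros sg m Hr s. destruct (reach_inv _ _ _ _ _ Hr) as [_ [_ Hpl]].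
    pose proof (Hpl s) as H. destruct (proj1_sig s); destruct H as [[-> _]|[-> _]]; auto.
  - split; [|split].
    + split; [|split; [|split; [|split; [|split; [|split; [|split]]]]]].
      * intros t t' H. destruct (flow_tr _ _ _ _ _ H t eq_refl) as [s [Hs _]]. discriminate.
      * intros t [s [Hpre [e' [He' Hlt]]]]. cbn in Hpre. unfold NP_pre in Hpre.
        rewrite He' in Hpre. subst. apply (Hirr t); auto.
      * intros t [s [_ []]].
      * intros s t [e' [He' Hlt]]. exists e'. split.
        -- exists e'. split; auto. cbn. unfold NP_pre. rewrite He'. reflexivity.
        -- intros t' Ht'. cbn in Ht' |- *. unfold NP_pre in Ht'. rewrite He' in Ht'. auto.
      * intros t t' H1 H2. apply precN_iff in H1. apply precN_iff in H2. apply (Hirr t); eauto.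
      * intro t. destruct (Hfin t) as [l Hl]. exists (map (pstar cf) l).
        intros [p Hp'] [[e' [He' Hlt]]|[]]. simpl in He'. subst p. destruct Hp'.
        change (In (pstar cf e') (map (pstar cf) l)). apply in_map. auto.
      * intros t t' Hc. destruct (classic (cf t t')) as [Hcf|Hcf].
        -- exists (exist (fun p => is_place cf p) (PCf (fun y => y = t \/ y = t'))
                   (ex_intro _ t (ex_intro _ t' (conj Hcf (fun y => iff_refl _))))).
           split; cbn; auto.
        -- exfalso. apply Hc. apply state_has; auto.
      * intros t t' Hne Hl. cbn in Hl. contradiction.
    + intros X _. apply Hpo. intros a b [_ [_ H]]; auto.
    + intro t. destruct (state_has _ _ _ Hp t t (Hcirr t)) as [X [HX [H _]]]. eauto.
  - intros s t [].
  - intros t t' H. exact H.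
  - apply Hpo; auto.
  - intros t t' t'' Hc H. apply (Hrt _ (fun a b h => h)) in H.
    destruct H as [<-|H]; auto.
    intros [X [HX [H1 H2]]]. apply Hc. exists X. split; auto. split; auto.
    eapply state_down; eauto.
Qed.
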